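(* Let $S,T$ be left inverse semi-braces and $\sigma:T\to\mathrm{Aut}(S)$ a homomorphism from $(T,\cdot)$ into the automorphism group of the left inverse semi-brace $S$; write ${}^ua=\sigma(u)(a)$. Then $S\times T$ with $$(a,u)+(b,v)=(a+b,\,u+v),\qquad (a,u)(b,v)=(a\,{}^ub,\,uv)$$ for all $(a,u),(b,v)\in S\times T$, is a left inverse semi-brace (the semidirect product $S\rtimes_\sigma T$).
   Context: An inverse semigroup is a semigroup $(S,\cdot)$ in which for each $a$ there is a unique $a^{-1}$ with $aa^{-1}a=a$, $a^{-1}aa^{-1}=a^{-1}$. A left inverse semi-brace is a triple $(S,+,\cdot)$ with $(S,+)$ a semigroup (not necessarily commutative), $(S,\cdot)$ an inverse semigroup and $a(b+c)=ab+a(a^{-1}+c)$ for all $a,b,c\in S$. An automorphism of the left inverse semi-brace $S$ is a bijection $S\to S$ preserving both $+$ and $\cdot$. *)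

(* Defs.v *)
From Stdlib Require Import FunctionalExtensionality.

Definition associative {S : Type} (op : S -> S -> S) : Prop :=
  forall a b c, op a (op b c) = op (op a b) c.

Definition is_inv {S : Type} (mul : S -> S -> S) (a b : S) : Prop :=
  mul (mul a b) a = a /\ mul (mul b a) b = b.

Definition inverse_semigroup {S : Type} (mul : S -> S -> S) : Prop :=
  associative mul /\
  forall a, exists b, is_inv mul a b /\ forall b', is_inv mul a b' -> b' = b.

Definition left_inverse_semi_brace {S : Type} (add mul : S -> S -> S) : Prop :=
  associative add /\ inverse_semigroup mul /\
  forall a a' b c, is_inv mul a a' ->
    mul a (add b c) = add (mul a b) (mul a (add a' c)).

Definition semi_brace_aut {S : Type} (add mul : S -> S -> S) (f : S -> S) : Prop :=
  (exists g : S -> S, (forall x, g (f x) = x) /\ (forall y, f (g y) = y)) /\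
  (forall a b, f (add a b) = add (f a) (f b)) /\
  (forall a b, f (mul a b) = mul (f a) (f b)).

Definition sd_add {S T : Type} (addS : S -> S -> S) (addT : T -> T -> T)
  (x y : S * T) : S * T := (addS (fst x) (fst y), addT (snd x) (snd y)).

Definition sd_mul {S T : Type} (mulS : S -> S -> S) (mulT : T -> T -> T)
  (sigma : T -> S -> S) (x y : S * T) : S * T :=
  (mulS (fst x) (sigma (snd x) (fst y)), mulT (snd x) (snd y)).

(* Main.v *)
Require Import Defs.

Theorem corollary31 (S T : Type)
  (addS mulS : S -> S -> S) (addT mulT : T -> T -> T)
  (sigma : T -> S -> S)
  (HS : left_inverse_semi_brace addS mulS)
  (HT : left_inverse_semi_brace addT mulT)
  (Haut : forall u, semi_brace_aut addS mulS (sigma u))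
  (Hhom : forall u v a, sigma (mulT u v) a = sigma u (sigma v a)) :
  left_inverse_semi_brace (sd_add addS addT) (sd_mul mulS mulT sigma).
Proof.
  destruct HS as [aS [[mS invS] brS]].
  destruct HT as [aT [[mT invT] brT]].
  assert (sid : forall e, mulT e e = e -> forall x, sigma e x = x).
  { intros e He x. destruct (Haut e) as [[g [Hg _]] _].
    rewrite <- (Hg (sigma e x)). rewrite <- Hhom, He. apply Hg. }
  assert (idem : forall u u', is_inv mulT u u' -> mulT (mulT u u') (mulT u u') = mulT u u').
  { intros u u' [H1 H2]. rewrite mT, H1. reflexivity. }
  assert (smul : forall u a b, sigma u (mulS a b) = mulS (sigma u a) (sigma u b)).
  { intros u a b. destruct (Haut u) as [_ [_ H]]. apply H. }
  assert (sadd : forall u a b, sigma u (addS a b) = addS (sigma u a) (sigma u b)).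
  { intros u a b. destruct (Haut u) as [_ [H _]]. apply H. }
  assert (invsym : forall {X} (m : X -> X -> X) a b, is_inv m a b -> is_inv m b a).
  { intros X m a b [H1 H2]. split; assumption. }
  assert (Hinv : forall a u a' u', is_inv mulS a a' -> is_inv mulT u u' ->
     is_inv (sd_mul mulS mulT sigma) (a,u) (sigma u' a', u')).
  { intros a u a' u' Ha Hu. pose proof (idem _ _ Hu) as Ie.
    pose proof (idem _ _ (invsym _ _ _ _ Hu)) as Ie'.
    destruct Ha as [Ha1 Ha2]. destruct Hu as [Hu1 Hu2].
    unfold is_inv, sd_mul; simpl. split.
    - rewrite <- Hhom, !sid by assumption. rewrite Ha1, Hu1. reflexivity.
    - rewrite <- !smul. rewrite (sid (mulT u' u)) by assumption.
      rewrite <- smul, Ha2, Hu2. reflexivity. }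
  assert (Huniq : forall a u a' u' p, is_inv mulS a a' -> is_inv mulT u u' ->
     is_inv (sd_mul mulS mulT sigma) (a,u) p -> p = (sigma u' a', u')).
  { intros a u a' u' [x v] Ha Hu [H1 H2].
    destruct (invS a) as [a'' [Ha'' Ua]]. destruct (invT u) as [u'' [Hu'' Uu]].
    assert (a' = a'') by (apply Ua; exact Ha). subst a''.
    assert (u' = u'') by (apply Uu; exact Hu). subst u''.
      unfold sd_mul in H1, H2; simpl in H1, H2.
      injection H1 as H1a H1b. injection H2 as H2a H2b.
      assert (v = u') by (apply Uu; split; assumption). subst v.
      pose proof (idem _ _ Hu) as Ie.
      pose proof (idem _ _ (invsym _ _ _ _ Hu)) as Ie'.
      rewrite (sid _ Ie) in H1a. rewrite (sid _ Ie') in H2a.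
      assert (Hy : is_inv mulS a (sigma u x)).
      { split; [assumption|].
        transitivity (sigma u (mulS (mulS x (sigma u' a)) x));
        [rewrite !smul, <- Hhom, (sid _ Ie); reflexivity | rewrite H2a; reflexivity]. }
      apply Ua in Hy. rewrite <- Hy, <- Hhom, (sid _ Ie'). reflexivity. }
  split; [|split].
  - intros [a u] [b v] [c w]. unfold sd_add; simpl. rewrite aS, aT. reflexivity.
  - split.
    + intros [a u] [b v] [c w]. unfold sd_mul; simpl.
      rewrite mT, smul, Hhom, mS. reflexivity.
    + intros [a u]. destruct (invS a) as [a' [Ha Ua]]. destruct (invT u) as [u' [Hu Uu]].
      exists (sigma u' a', u'). split; [apply Hinv; assumption|].
      intros p Hp. exact (Huniq _ _ _ _ p Ha Hu Hp).
  - intros [a u] [a0 u0] [b v] [c w] Hi.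
    destruct (invS a) as [a' [Ha Ua]]. destruct (invT u) as [u' [Hu Uu]].
    pose proof (Hinv _ _ _ _ Ha Hu) as Hi'.
    assert (E : (a0, u0) = (sigma u' a', u')).
    { exact (Huniq _ _ _ _ _ Ha Hu Hi). }
    rewrite E. unfold sd_mul, sd_add; simpl.
    rewrite !sadd, <- Hhom, (sid _ (idem _ _ Hu)).
    rewrite (brS a a' (sigma u b) (sigma u c) Ha), (brT u u' v w Hu). reflexivity.
Qed.
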